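(* Let $X$ be a continuum, let $n\geq 2$ be an integer, and let $f:X\to X$ be a map. Consider the statements: (1) $f$ is $\mathbb{Z}$-transitive; (2) $F_n(f)$ is $\mathbb{Z}$-transitive; (3) $SF_n(f)$ is $\mathbb{Z}$-transitive. Then (2) and (3) are equivalent and (2) implies (1). Moreover, (1) does not imply (2) in general: there exist a continuum $X$, an integer $n\geq2$ and a map $f:X\to X$ that is $\mathbb{Z}$-transitive while $F_n(f)$ is not.
   Context: A continuum is a nonempty compact connected metric space. For $n\in\mathbb{N}$, $F_n(X)$ is the set of nonempty subsets of $X$ with at most $n$ points, with the Vietoris (Hausdorff metric) topology; $F_1(X)=\{\{x\}:x\in X\}$; $F_n(f)(A)=f(A)$. For $n\geq2$, $SF_n(X)=F_n(X)/F_1(X)$ is the quotient space collapsing $F_1(X)$ to a point, $q$ the quotient map, $F_X=q(F_1(X))$, and $SF_n(f)(\chi)=q(F_n(f)(q^{-1}(\chi)))$ for $\chi\neq F_X$, $SF_n(f)(F_X)=F_X$. A map $g:Z\to Z$ is $\mathbb{Z}$-transitive if for any nonempty open $U,V\subseteq Z$ there is $k\in\mathbb{Z}$ with $g^k(U)\cap V\neq\emptyset$, where for $k<0$, $g^k(U)$ means $(g^{-k})^{-1}(U)$ and $g^0$ is the identity. *)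

(* Defs.v *)
From HB Require Import structures.
From mathcomp Require Import all_boot all_order all_algebra.
From mathcomp Require Import all_classical all_reals all_analysis.
Set Implicit Arguments. Unset Strict Implicit. Unset Printing Implicit Defensive.
Import Order.TTheory GRing.Theory Num.Theory.
Local Open Scope classical_set_scope.
Local Open Scope ring_scope.

Definition continuum (R : realType) (X : metricType R) : Prop :=
  [set: X] !=set0 /\ compact [set: X] /\ connected [set: X].

Definition Fn (X : choiceType) (n : nat) : set (set X) :=
  [set A | A !=set0 /\ exists s : seq X, (size s <= n)%N /\ (forall x, A x <-> x \in s)].

Definition vietoris_basic (X : Type) (m : nat) (U : 'I_m -> set X) : set (set X) :=
  [set A | (forall x, A x -> exists i, U i x) /\ (forall i, exists x, A x /\ U i x)].

Definition Fn_open (X : topologicalType) (n : nat) (W : set (set X)) : Prop :=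
  W `<=` @Fn X n /\
  forall A, W A -> exists (m : nat) (U : 'I_m -> set X),
    (forall i, open (U i)) /\ vietoris_basic U A /\
    (vietoris_basic U `&` @Fn X n `<=` W).

Definition Fn_map (X : Type) (f : X -> X) (A : set X) : set X := f @` A.

(* SF_n(X) = F_n(X)/F_1(X), modelled inside option (set X):
   None is the collapsed point F_X, Some A is the class {A} of a non-singleton A. *)
Definition qSF (X : Type) (A : set X) : option (set X) :=
  if pselect (exists x, A = [set x]) then None else Some A.

Definition SFn (X : choiceType) (n : nat) : set (option (set X)) := (@qSF X) @` @Fn X n.

Definition SFn_open (X : topologicalType) (n : nat) (W : set (option (set X))) : Prop :=
  W `<=` @SFn X n /\ @Fn_open X n (@Fn X n `&` (@qSF X) @^-1` W).

Definition SFn_map (X : Type) (f : X -> X) (c : option (set X)) : option (set X) :=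
  match c with None => None | Some A => qSF (f @` A) end.

Definition iterZ_img (T : Type) (g : T -> T) (k : int) (U : set T) : set T :=
  match k with
  | Posz m => iter m g @` U
  | Negz m => iter m.+1 g @^-1` U
  end.

Definition Ztransitive_on (T : Type) (D : set T) (isopen : set T -> Prop) (g : T -> T) : Prop :=
  forall U V, U `<=` D -> V `<=` D -> isopen U -> isopen V ->
    U !=set0 -> V !=set0 -> exists k : int, iterZ_img g k U `&` V !=set0.

Definition Ztransitive (X : topologicalType) (f : X -> X) : Prop :=
  Ztransitive_on [set: X] open f.

Definition Fn_Ztransitive (X : topologicalType) (n : nat) (f : X -> X) : Prop :=
  Ztransitive_on (@Fn X n) (@Fn_open X n) (@Fn_map X f).

Definition SFn_Ztransitive (X : topologicalType) (n : nat) (f : X -> X) : Prop :=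
  Ztransitive_on (@SFn X n) (@SFn_open X n) (@SFn_map X f).

(* Main.v *)
Require Import Defs.
From mathcomp Require Import all_boot all_order all_algebra.
From mathcomp Require Import all_classical all_reals all_analysis.
Local Open Scope classical_set_scope.
Local Open Scope ring_scope.
From HB Require Import structures.
From mathcomp Require Import lra ring.
Set Implicit Arguments. Unset Strict Implicit. Unset Printing Implicit Defensive.
Import Order.TTheory GRing.Theory Num.Theory.
Import numFieldNormedType.Exports.


Definition I01 (R : realType) := {x : R | (0 <= x <= 1)}.
HB.instance Definition _ (R : realType) := Choice.on (I01 R).
Definition idist (R : realType) (x y : I01 R) : R := `|val x - val y|.
Lemma idist_xx (R : realType) (x : I01 R) : idist x x = 0.
Proof. by rewrite /idist subrr normr0. Qed.
Lemma idist_pos (R : realType) (x y : I01 R) : idist x y = 0 -> x = y.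
Proof. by move/normr0_eq0/eqP; rewrite subr_eq0 => /eqP/val_inj. Qed.
Lemma idist_sym (R : realType) (x y : I01 R) : idist x y = idist y x.
Proof. by rewrite /idist distrC. Qed.
Lemma idist_tri (R : realType) (y x z : I01 R) : idist x z <= idist x y + idist y z.
Proof. by rewrite /idist; apply: ler_distD. Qed.
HB.instance Definition _ (R : realType) := @isMetric.Build R (I01 R) (@idist R)
  (@idist_xx R) (@idist_pos R) (@idist_sym R) (@idist_tri R).
Lemma ballI (R : realType) (x : I01 R) e : ball x e = [set y | `|val x - val y| < e].
Proof. by rewrite ballEmdist. Qed.
Lemma ballR (R : realType) (x : R) e : ball x e = [set y : R | `|x - y| < e].
Proof. by rewrite -ball_normE. Qed.
Definition clamp (R : realType) (x : R) : R := Num.min 1 (Num.max 0 x).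
Lemma clamp01 (R : realType) (x : R) : 0 <= clamp x <= 1.
Proof.
rewrite /clamp; apply/andP; split.
  by rewrite le_min ler01 le_max lexx.
by rewrite ge_min lexx.
Qed.
Lemma clamp_cases (R : realType) (x : R) :
  (x <= 0 /\ clamp x = 0) \/ (1 <= x /\ clamp x = 1) \/ (0 <= x <= 1 /\ clamp x = x).
Proof.
rewrite /clamp; case: (leP x 0) => hx.
  by left; split => //; rewrite (min_r ler01).
case: (leP 1 x) => h1.
  by right; left.
by right; right; rewrite (ltW hx) (ltW h1).
Qed.
Lemma clamp_lip (R : realType) (x y : R) : `|clamp x - clamp y| <= `|x - y|.
Proof.
have h1 := ler_norm (x - y); have h2 := ler_norm (y - x); rewrite distrC in h2.
rewrite ler_norml.
case: (clamp_cases x) => [[a ->]|[[a ->]|[/andP[a b] ->]]];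
case: (clamp_cases y) => [[c ->]|[[c ->]|[/andP[c d] ->]]]; apply/andP; split; lra.
Qed.
Definition gcl (R : realType) (x : R) : I01 R := exist _ (clamp x) (clamp01 x).
Lemma gcl_cont (R : realType) : continuous (@gcl R).
Proof.
move=> x; apply/cvg_ballP => e e0; apply/nbhs_ballP; exists e => // y.
rewrite ballI /= => h; exact: le_lt_trans (clamp_lip _ _) h.
Qed.
Lemma gcl_surj (R : realType) : (@gcl R) @` `[0, 1] = [set: I01 R].
Proof.
apply/seteqP; split => // x _; exists (val x).
  by case: x => v /= /andP[a b]; rewrite /= in_itv /= a b.
apply: val_inj => /=; case: x => v /= /andP[a b].
by case: (clamp_cases v) => [[c ->]|[[c ->]|[_ ->]]] //; apply/eqP; rewrite eq_le ?a ?b ?c.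
Qed.
Lemma I01_continuum (R : realType) : continuum (I01 R).
Proof.
split; first by exists (gcl 0).
split.
  rewrite -gcl_surj; apply: continuous_compact; last exact: segment_compact.
  exact: continuous_subspaceT (@gcl_cont R).
rewrite -gcl_surj; apply: connected_continuous_connected.
  by apply/connected_intervalP; apply: interval_is_interval.
exact: continuous_subspaceT (@gcl_cont R).
Qed.



Definition fr (R : realType) (x : R) : R :=
  if x <= 4^-1 then 2^-1 + 2 * x else if x <= 3 / 4 then 3 / 2 - 2 * x else 2 * x - 3 / 2.

Lemma fr1 (R : realType) (x : R) : x <= 4^-1 -> fr x = 2^-1 + 2 * x.
Proof. by rewrite /fr => ->. Qed.
Lemma fr2 (R : realType) (x : R) : 4^-1 <= x <= 3/4 -> fr x = 3/2 - 2 * x.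
Proof.
move=> /andP[a b]; rewrite /fr b; case: ifP => // h.
have -> : x = 4^-1 by apply/eqP; rewrite eq_le h a.
lra.
Qed.
Lemma fr3 (R : realType) (x : R) : 3/4 <= x -> fr x = 2 * x - 3/2.
Proof.
move=> a; rewrite /fr; case: ifP => h1; first lra.
case: ifP => // h.
have -> : x = 3/4 by apply/eqP; rewrite eq_le h a.
lra.
Qed.
Lemma fr_cases (R : realType) (x : R) :
  (x <= 4^-1 /\ fr x = 2^-1 + 2 * x) \/ (4^-1 <= x <= 3/4 /\ fr x = 3/2 - 2 * x)
  \/ (3/4 <= x /\ fr x = 2 * x - 3/2).
Proof.
case: (leP x 4^-1) => h1; first by left; rewrite fr1.
case: (leP x (3/4)) => h2; first by right; left; rewrite fr2 ?(ltW h1) ?h2.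
by right; right; rewrite fr3 ?(ltW h2).
Qed.
Lemma fr_lip (R : realType) (x y : R) : `|fr x - fr y| <= 2 * `|x - y|.
Proof.
have h1 := ler_norm (x - y); have h2 := ler_norm (y - x); rewrite distrC in h2.
rewrite ler_norml.
case: (fr_cases x) => [[a ->]|[[/andP[a b] ->]|[a ->]]];
case: (fr_cases y) => [[c ->]|[[/andP[c d] ->]|[c ->]]]; apply/andP; split; lra.
Qed.
Lemma fr01 (R : realType) (x : R) : 0 <= x <= 1 -> 0 <= fr x <= 1.
Proof.
move=> /andP[a b]; apply/andP.
case: (fr_cases x) => [[c ->]|[[/andP[c d] ->]|[c ->]]]; split; lra.
Qed.



Definition cov (R : realType) (k : nat) (a b c d : R) :=
  forall y, c <= y <= d -> exists x, a <= x <= b /\ iter k (@fr R) x = y.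

Lemma cov_trans (R : realType) k j (a b c d e g : R) :
  cov k a b c d -> cov j c d e g -> cov (j + k) a b e g.
Proof.
move=> h1 h2 y /h2 [z [/h1 [x [hx <-]] <-]]; exists x; split => //.
by rewrite iterD.
Qed.
Lemma cov_mono (R : realType) k (a b c d a' b' c' d' : R) :
  cov k a b c d -> a' <= a -> b <= b' -> c <= c' -> d' <= d -> cov k a' b' c' d'.
Proof.
move=> h ha hb hc hd y /andP[y1 y2].
have [|x [/andP[x1 x2] <-]] := h y; first by apply/andP; split; lra.
by exists x; split => //; apply/andP; split; lra.
Qed.
Lemma cov_p1 (R : realType) (a b : R) : 0 <= a -> b <= 4^-1 ->
  cov 1 a b (2^-1 + 2 * a) (2^-1 + 2 * b).
Proof.
move=> ha hb y /andP[y1 y2]; exists ((y - 2^-1) / 2); split.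
  by apply/andP; split; lra.
by rewrite /= fr1; lra.
Qed.
Lemma cov_p2 (R : realType) (a b : R) : 4^-1 <= a -> b <= 3/4 ->
  cov 1 a b (3/2 - 2 * b) (3/2 - 2 * a).
Proof.
move=> ha hb y /andP[y1 y2]; exists ((3/2 - y) / 2); split.
  by apply/andP; split; lra.
by rewrite /= fr2; [lra|apply/andP; split; lra].
Qed.
Lemma cov_p3 (R : realType) (a b : R) : 3/4 <= a -> b <= 1 ->
  cov 1 a b (2 * a - 3/2) (2 * b - 3/2).
Proof.
move=> ha hb y /andP[y1 y2]; exists ((y + 3/2) / 2); split.
  by apply/andP; split; lra.
by rewrite /= fr3; lra.
Qed.

Definition good (R : realType) (a b : R) :=
  exists k, cov k a b 0 (2^-1) \/ cov k a b (2^-1) 1.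

Lemma good_cov (R : realType) k (a b c d : R) : cov k a b c d -> good c d -> good a b.
Proof.
move=> h [j [hj|hj]]; exists (j + k); [left|right]; exact: cov_trans h hj.
Qed.

Lemma fp_good (R : realType) (N : nat) (c : R) : 0 < c -> 1 < 2 ^+ N * (4 * c) ->
  good (2^-1 - c) (2^-1) /\ good (2^-1) (2^-1 + c).
Proof.
have base : forall c : R, 4^-1 <= c -> good (2^-1 - c) (2^-1) /\ good (2^-1) (2^-1 + c).
  move=> {}c hc; split; exists 1%N.
    right; apply: (cov_mono (@cov_p2 R 4^-1 2^-1 _ _)); lra.
  left; apply: (cov_mono (@cov_p2 R 2^-1 (3/4) _ _)); lra.
move: c; elim: N => [|N IH] c c0 hN.
  by apply: base; rewrite expr0 mul1r in hN; lra.
case: (leP (4^-1) c) => hc; first exact: base.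
have [h1 h2] : good (2^-1 - 2 * c) (2^-1) /\ good (2^-1) (2^-1 + 2 * c).
  apply: IH; first lra.
  suff -> : 2 ^+ N * (4 * (2 * c)) = 2 ^+ N.+1 * (4 * c) :> R by [].
  by rewrite exprS; ring.
split.
  apply: good_cov h2; apply: (cov_mono (@cov_p2 R (2^-1 - c) 2^-1 _ _)); lra.
apply: good_cov h1; apply: (cov_mono (@cov_p2 R 2^-1 (2^-1 + c) _ _)); lra.
Qed.

Lemma pow_big (R : realType) (t : R) : 0 < t -> exists N : nat, 1 < 2 ^+ N * t.
Proof.
move=> t0; exists (Num.Def.trunc t^-1).+1.
have h1 := truncnS_gt t^-1.
have h2 : (Num.Def.trunc t^-1).+1%:R <= 2 ^+ (Num.Def.trunc t^-1).+1 :> R.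
  rewrite -natrX ler_nat; exact: ltnW (ltn_expl _ _).
have : t^-1 < 2 ^+ (Num.Def.trunc t^-1).+1 by exact: lt_le_trans h1 h2.
by rewrite -ltr_pdivrMr // div1r.
Qed.

Lemma fp_good' (R : realType) (c : R) : 0 < c ->
  good (2^-1 - c) (2^-1) /\ good (2^-1) (2^-1 + c).
Proof.
move=> c0; have [N hN] := pow_big (mulr_gt0 (ltr0n R 4) c0).
exact: fp_good hN.
Qed.

Lemma main_good (R : realType) (N : nat) (a b : R) : 0 <= a -> a < b -> b <= 1 ->
  1 < 2 ^+ N * (b - a) -> good a b.
Proof.
move: a b; elim: N => [|N IH] a b a0 ab b1 hN.
  by rewrite expr0 mul1r in hN; lra.
have IH' : forall a' b' : R, 0 <= a' -> a' < b' -> b' <= 1 -> b' - a' = 2 * (b - a) ->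
    good a' b'.
  move=> a' b' ha hab hb e; apply: (IH a' b') => //.
  by rewrite e; suff -> : 2 ^+ N * (2 * (b - a)) = 2 ^+ N.+1 * (b - a) :> R by []; rewrite exprS; ring.
case: (leP b 4^-1) => hb1.
  apply: good_cov (@cov_p1 R a b _ _) _ => //.
  apply: IH'; lra.
case: (ltP a 4^-1) => ha1.
  case: (leP (2^-1 + 2 * a) (3/4)) => hc.
    exists 2%N; left.
    apply: (@cov_trans R 1 1 a b (2^-1 + 2 * a) 1).
      apply: (cov_mono (@cov_p1 R a 4^-1 _ _)); lra.
    apply: (cov_mono (@cov_p3 R (3/4) 1 _ _)); lra.
  have [h _] := @fp_good' R (2 - 4 * a - 2^-1 - 2^-1) ltac:(lra).
  apply: good_cov h.
  apply: (@cov_trans R 1 1 a b (2^-1 + 2 * a) 1).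
    apply: (cov_mono (@cov_p1 R a 4^-1 _ _)); lra.
  apply: (cov_mono (@cov_p3 R (2^-1 + 2 * a) 1 _ _)); lra.
case: (leP b (3/4)) => hb2.
  apply: good_cov (@cov_p2 R a b _ _) _ => //.
  apply: IH'; lra.
case: (ltP a (3/4)) => ha2.
  case: (leP 4^-1 (2 * b - 3/2)) => he.
    exists 2%N; right.
    apply: (@cov_trans R 1 1 a b 0 (2 * b - 3/2)).
      apply: (cov_mono (@cov_p3 R (3/4) b _ _)); lra.
    apply: (cov_mono (@cov_p1 R 0 4^-1 _ _)); lra.
  have [_ h] := @fp_good' R (2 * (2 * b - 3/2)) ltac:(lra).
  apply: good_cov h.
  apply: (@cov_trans R 1 1 a b 0 (2 * b - 3/2)).
    apply: (cov_mono (@cov_p3 R (3/4) b _ _)); lra.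
  apply: (cov_mono (@cov_p1 R 0 (2 * b - 3/2) _ _)); lra.
apply: good_cov (@cov_p3 R a b _ _) _ => //.
apply: IH'; lra.
Qed.



Lemma good_all (R : realType) (a b : R) : 0 <= a -> a < b -> b <= 1 -> good a b.
Proof.
move=> a0 ab b1; have [N hN] := @pow_big R (b - a) ltac:(lra).
exact: main_good hN.
Qed.

Lemma good_hit (R : realType) (a b : R) : good a b -> forall y : R, 0 <= y <= 1 ->
  exists j x, a <= x <= b /\ iter j (@fr R) x = y.
Proof.
have c1 : @cov R 1 0 (2^-1) (2^-1) 1.
  apply: (cov_mono (@cov_p1 R 0 4^-1 _ _)); lra.
have c2 : @cov R 1 (2^-1) 1 0 (2^-1).
  apply: (cov_mono (@cov_p2 R 2^-1 (3/4) _ _)); lra.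
move=> [k hk] y /andP[y0 y1].
have [[j1 h1] [j2 h2]] : (exists j, cov j a b 0 (2^-1)) /\ (exists j, cov j a b (2^-1) 1).
  case: hk => h.
    by split; [exists k | exists (1 + k)%N; exact: cov_trans h c1].
  by split; [exists (1 + k)%N; exact: cov_trans h c2 | exists k].
case: (leP y 2^-1) => hy.
  have [x [hx e]] := h1 y ltac:(apply/andP; split; lra).
  by exists j1, x.
have [x [hx e]] := h2 y ltac:(apply/andP; split; lra).
by exists j2, x.
Qed.

Definition fX (R : realType) (x : I01 R) : I01 R := exist _ (fr (val x)) (fr01 (valP x)).

Lemma val_iter (R : realType) j (x : I01 R) : val (iter j (@fX R) x) = iter j (@fr R) (val x).
Proof. by elim: j => //= j ->. Qed.

Lemma fX_cont (R : realType) : continuous (@fX R).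
Proof.
move=> x.
have FF : Filter (nbhs x) by exact: nbhs_filter.
apply/(@cvg_ballP _ _ _ _ FF) => e e0; apply/nbhs_ballP; exists (e / 2) => [|y]; first by rewrite /= divr_gt0.
rewrite /= !ballI /= => h; apply: le_lt_trans (fr_lip _ _) _; lra.
Qed.

Lemma fX_Ztrans (R : realType) : Ztransitive (@fX R).
Proof.
move=> U V _ _ oU oV [u Uu] [v Vv].
have /nbhs_ballP[e /= e0 sub] : nbhs u U.
  by rewrite openE in oU; exact: oU.
have [a [b [a0 [ab [b1 hab]]]]] : exists a b : R, 0 <= a /\ a < b /\ b <= 1 /\
    forall x, a <= x <= b -> `|val u - x| < e.
  have [del [d0 [d1 d2]]] : exists del : R, 0 < del /\ del < e /\ del <= 4^-1.
    case: (leP (e / 2) 4^-1) => h; first by exists (e / 2); split; lra.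
    by exists 4^-1; split; lra.
  case: u Uu sub => u hu01 Uu sub; have /andP[u0 u1] := hu01; rewrite /=.
  case: (leP u 2^-1) => hu.
    exists u, (u + del); do 3!(split; first lra).
    by move=> x /andP[x1 x2]; rewrite ltr_norml; apply/andP; split; lra.
  exists (u - del), u; do 3!(split; first lra).
  by move=> x /andP[x1 x2]; rewrite ltr_norml; apply/andP; split; lra.
have [j [x [/andP[x1 x2] hx]]] := good_hit (good_all a0 ab b1) (valP v).
have x01 : 0 <= x <= 1 by apply/andP; split; lra.
pose p : I01 R := exist _ x x01.
exists (Posz j); exists v; split => //; exists p.
  by apply: sub; rewrite ballI /=; apply: hab; rewrite x1 x2.
by apply: val_inj; rewrite val_iter.
Qed.

Lemma iter_Fn_map (T : Type) (f : T -> T) m (A : set T) :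
  iter m (Fn_map f) A = iter m f @` A.
Proof.
elim: m => [|m IH] /=; first by rewrite image_id.
rewrite IH /Fn_map; apply/seteqP; split => y.
  by move=> [_ [x Ax <-] <-]; exists x.
by move=> [x Ax <-]; exists (iter m f x) => //; exists x.
Qed.

Lemma fr_side (R : realType) (y : R) : 0 <= y <= 1 ->
  (y <= 2^-1 -> 2^-1 <= fr y) /\ (2^-1 <= y -> fr y <= 2^-1).
Proof.
move=> /andP[a b].
case: (fr_cases y) => [[c ->]|[[/andP[c d] ->]|[c ->]]]; split; lra.
Qed.

Lemma par (R : realType) j (x : I01 R) :
  (val x <= 2^-1 -> if odd j then 2^-1 <= val (iter j (@fX R) x) else val (iter j (@fX R) x) <= 2^-1) /\
  (2^-1 <= val x -> if odd j then val (iter j (@fX R) x) <= 2^-1 else 2^-1 <= val (iter j (@fX R) x)).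
Proof.
elim: j => [|j [IH1 IH2]] /=; first by split.
have [s1 s2] := fr_side (valP (iter j (@fX R) x)).
split => h.
  by case: (odd j) (IH1 h) => /= h'; [apply: s2|apply: s1].
by case: (odd j) (IH2 h) => /= h'; [apply: s1|apply: s2].
Qed.

Definition Xl (R : realType) : set (I01 R) := [set x | val x < 4^-1].
Definition Xr (R : realType) : set (I01 R) := [set x | 3/4 < val x].

Lemma open_Xl (R : realType) : open (@Xl R).
Proof.
rewrite openE => x hx; apply/nbhs_ballP; exists (4^-1 - val x) => [|y]; first by rewrite /= subr_gt0.
rewrite ballI /Xl /= ltr_norml => /andP[h1 h2]; lra.
Qed.
Lemma open_Xr (R : realType) : open (@Xr R).
Proof.
rewrite openE => x hx; apply/nbhs_ballP; exists (val x - 3/4) => [|y]; first by rewrite /= subr_gt0.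
rewrite ballI /Xr /= ltr_norml => /andP[h1 h2]; lra.
Qed.

Definition x0 (R : realType) : I01 R := exist _ 0 (introT andP (conj (lexx (0:R)) ler01)).
Definition x1 (R : realType) : I01 R := exist _ 1 (introT andP (conj ler01 (lexx (1:R)))).

Lemma not_Fn_Ztrans (R : realType) : ~ Fn_Ztransitive 2 (@fX R).
Proof.
pose UU := vietoris_basic (fun _ : 'I_1 => @Xl R) `&` @Fn (I01 R) 2.
pose VV := vietoris_basic (fun i : 'I_2 => if val i == 0%N then @Xl R else @Xr R) `&` @Fn (I01 R) 2.
move=> H.
have [] := H UU VV.
- by move=> A [].
- by move=> A [].
- split; first by move=> A [].
  move=> A [hA hF]; exists 1%N, (fun _ => @Xl R); split; first by move=> _; exact: open_Xl.
  by split.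
- split; first by move=> A [].
  move=> A [hA hF]; exists 2%N, (fun i : 'I_2 => if val i == 0%N then @Xl R else @Xr R).
  split; last by split.
  by move=> i; case: ifP => _; [exact: open_Xl|exact: open_Xr].
- exists [set x0 R]; split.
    split; first by move=> x ->; exists ord0; rewrite /Xl /=; lra.
    by move=> i; exists (x0 R); split => //; rewrite /Xl /=; lra.
  split; first by exists (x0 R).
  exists [:: x0 R]; split => // x; rewrite inE; split => [->//|/eqP//].
- exists [set x | x = x0 R \/ x = x1 R]; split.
    split.
      move=> x [->|->]; [exists (@Ordinal 2 0 isT)|exists (@Ordinal 2 1 isT)];
        rewrite /= /Xl /Xr /=; lra.
    move=> [[|[|//]] i] /=.
      by exists (x0 R); split; [left|rewrite /Xl /=; lra].
    by exists (x1 R); split; [right|rewrite /Xr /=; lra].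
  split; first by exists (x0 R); left.
  exists [:: x0 R; x1 R]; split => // x; rewrite !inE; split.
    by move=> [->|->]; rewrite eqxx ?orbT.
  by move=> /orP[/eqP|/eqP]; [left|right].
move=> k [B [hB [[_ hV] _]]].
have [b1 [Bb1 hb1]] := hV (@Ordinal 2 0 isT).
have [b2 [Bb2 hb2]] := hV (@Ordinal 2 1 isT).
have {}hb1 : val b1 < 4^-1 := hb1; have {}hb2 : 3/4 < val b2 := hb2.
case: k hB => m.
  move=> /= [A [[hA _] _] eB]; rewrite iter_Fn_map in eB; subst B.
  case: Bb1 => a1 Aa1 e1; case: Bb2 => a2 Aa2 e2.
  have [_ ha1] := hA a1 Aa1; have [_ ha2] := hA a2 Aa2.
  have {}ha1 : val a1 < 4^-1 := ha1; have {}ha2 : val a2 < 4^-1 := ha2.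
  have [p1 _] := par m a1; have [p2 _] := par m a2.
  have := p1 ltac:(lra); have := p2 ltac:(lra); rewrite e1 e2.
  by case: (odd m) => ? ?; lra.
move=> hB; have : UU (iter m.+1 (Fn_map (@fX R)) B) := hB.
rewrite iter_Fn_map => -[[hU _] _].
have [_ h1] := hU (iter m.+1 (@fX R) b1) (imageP _ Bb1).
have [_ h2] := hU (iter m.+1 (@fX R) b2) (imageP _ Bb2).
have {}h1 : val (iter m.+1 (@fX R) b1) < 4^-1 := h1.
have {}h2 : val (iter m.+1 (@fX R) b2) < 4^-1 := h2.
have [p1 _] := par m.+1 b1; have [_ p2] := par m.+1 b2.
have := p1 ltac:(lra); have := p2 ltac:(lra).
by case: (odd m.+1) => ? ?; lra.
Qed.



Lemma iter_Fn_map' (T : Type) (f : T -> T) m (A : set T) :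
  iter m (Fn_map f) A = iter m f @` A.
Proof.
elim: m => [|m IH] /=; first by rewrite image_id.
rewrite IH /Fn_map; apply/seteqP; split => y.
  by move=> [_ [x Ax <-] <-]; exists x.
by move=> [x Ax <-]; exists (iter m f x) => //; exists x.
Qed.

Lemma qSF_map (T : Type) (f : T -> T) (A : set T) : SFn_map f (qSF A) = qSF (f @` A).
Proof.
rewrite {1}/qSF; case: pselect => [[x e]|h] //=.
rewrite e image_set1 /qSF; case: pselect => // h; exfalso; apply: h; by exists (f x).
Qed.

Lemma iter_qSF (T : Type) (f : T -> T) m (A : set T) :
  iter m (SFn_map f) (qSF A) = qSF (iter m (Fn_map f) A).
Proof. by elim: m => //= m ->; rewrite qSF_map. Qed.

Lemma qSF_some (T : Type) (A : set T) : ~ (exists x, A = [set x]) -> qSF A = Some A.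
Proof. by rewrite /qSF; case: pselect. Qed.

Lemma qSF_Some (T : Type) (A B : set T) : qSF B = Some A -> B = A /\ ~ (exists x, B = [set x]).
Proof. by rewrite /qSF; case: pselect => // h [<-]. Qed.

Lemma Fn1 (T : choiceType) n (x : T) : (1 <= n)%N -> Fn n [set x].
Proof.
move=> n1; split; first by exists x.
exists [:: x]; split => // y; rewrite inE; split => [->//|/eqP//].
Qed.

Lemma Fn2 (T : choiceType) n (x z : T) : (2 <= n)%N -> Fn n [set y | y = x \/ y = z].
Proof.
move=> n2; split; first by exists x; left.
exists [:: x; z]; split => // y; rewrite !inE; split.
  by move=> [->|->]; rewrite eqxx ?orbT.
by move=> /orP[/eqP|/eqP]; [left|right].
Qed.

Lemma p21 (R : realType) (X : metricType R) n (f : X -> X) :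
  (1 <= n)%N -> Fn_Ztransitive n f -> Ztransitive f.
Proof.
move=> n1 H U V _ _ oU oV [u Uu] [v Vv].
pose UU := vietoris_basic (fun _ : 'I_1 => U) `&` @Fn X n.
pose VV := vietoris_basic (fun _ : 'I_1 => V) `&` @Fn X n.
have oW : forall W : set X, open W -> Fn_open n (vietoris_basic (fun _ : 'I_1 => W) `&` @Fn X n).
  move=> W oW; split; first by move=> A [].
  by move=> A [hA hF]; exists 1%N, (fun _ => W); split => //; split.
have neW : forall (W : set X) w, W w -> (vietoris_basic (fun _ : 'I_1 => W) `&` @Fn X n) !=set0.
  move=> W w Ww; exists [set w]; split; last exact: Fn1.
  by split; [move=> x ->; exists ord0 | move=> i; exists w].
have [] := H UU VV; try by move=> A [].
- exact: oW.
- exact: oW.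
- exact: neW Uu.
- exact: neW Vv.
move=> k [B [hB [[hV _] [[b Bb] _]]]].
have [_ Vb] := hV b Bb.
case: k hB => m.
  move=> /= [A [[hA _] [[a Aa] _]] eB]; rewrite iter_Fn_map' in eB; subst B.
  have [y [Ay eb]] : exists y, A y /\ iter m f y = b.
    by case: Bb => y Ay e; exists y.
  have [_ Uy] := hA y Ay.
  by exists (Posz m), b; split => //; exists y.
move=> hB; have : UU (iter m.+1 (Fn_map f) B) := hB.
rewrite iter_Fn_map' => -[[hU _] _].
have [_ Ub] := hU (iter m.+1 f b) (imageP _ Bb).
by exists (Negz m), b; split.
Qed.

Lemma p23 (R : realType) (X : metricType R) n (f : X -> X) :
  Fn_Ztransitive n f -> SFn_Ztransitive n f.
Proof.
move=> H U V sU sV [_ oU] [_ oV] [u Uu] [v Vv].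
have ne : forall W : set (option (set X)), W `<=` SFn n -> forall w, W w ->
    (Fn n `&` (@qSF X) @^-1` W) !=set0.
  move=> W sW w Ww; have [A FA eA] := sW w Ww.
  by exists A; split => //; rewrite /preimage /= eA.
have [] := H _ _ (@subIsetl _ _ _) (@subIsetl _ _ _) oU oV (ne U sU u Uu) (ne V sV v Vv).
move=> k [B [hB [FB VB]]].
case: k hB => m.
  move=> /= [A [FA UA] eB]; exists (Posz m), (qSF B); split => //=.
  by exists (qSF A) => //; rewrite iter_qSF eB.
move=> hB; have [_ hU] : (Fn n `&` (@qSF X) @^-1` U) (iter m.+1 (Fn_map f) B) := hB.
exists (Negz m), (qSF B); split => //=.
by have := iter_qSF f m.+1 B; rewrite /= => ->.
Qed.

Definition nsing (T : Type) : set (set T) := [set A | ~ exists x, A = [set x]].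

Lemma singleton_open_all (R : realType) (X : metricType R) (x : X) :
  connected [set: X] -> open [set x] -> [set x] = [set: X].
Proof.
move=> c o; apply: c; first by exists x.
  by exists [set x] => //; rewrite setTI.
exists [set x]; last by rewrite setTI.
apply: accessible_closed_set1; apply: hausdorff_accessible; exact: metric_hausdorff.
Qed.

Lemma two_points (T : Type) (A : set T) a : A a -> @nsing T A -> exists b, A b /\ b <> a.
Proof.
move=> Aa ns; apply: contrapT => hn; apply: ns; exists a.
apply/seteqP; split => y; last by move=> ->.
by move=> Ay; apply: contrapT => ya; apply: hn; exists y.
Qed.

Lemma open_nsing (R : realType) (X : metricType R) n (U : set (set X)) :
  Fn_open n U -> Fn_open n (U `&` @nsing X).
Proof.
move=> [sU oU]; split; first by move=> A [/sU].
move=> A [UA nsA]; have [m [G [oG [[vA1 vA2] sub]]]] := oU A UA.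
have [[a Aa] _] := sU A UA.
have [b [Ab ba]] := two_points Aa nsA.
have := @metric_hausdorff R X; rewrite open_hausdorff => /(_ a b).
move=> /(_ ltac:(by apply/eqP => e; apply: ba)) [[Oa Ob]] /= [].
rewrite !inE => aOa bOb [oOa oOb dis]; move/eqP: dis => dis.
pose W := \bigcup_(i in [set: 'I_m]) G i.
have oW : open W by apply: bigcup_open => i _; exact: oG.
pose G' : 'I_(m + 2) -> set X := fun i => match fintype.split i with
  | inl j => G j | inr j => if val j == 0%N then Oa `&` W else Ob `&` W end.
have GW : forall x, A x -> W x.
  by move=> x /vA1 [j Gj]; exists j.
exists (m + 2)%N, G'; split.
  move=> i; rewrite /G'; case: (fintype.split i) => j; first exact: oG.
  by case: ifP => _; apply: openI.
split.
  split.
    move=> x /vA1 [j Gj]; exists (unsplit (inl j)); by rewrite /G' unsplitK.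
  move=> i; rewrite /G'; case: (fintype.split i) => j; first exact: vA2.
  case: ifP => _; [exists a | exists b]; split => //; split => //; exact: GW.
move=> B [[vB1 vB2] FB]; split.
  apply: sub; split => //; split.
    move=> x /vB1 [i]; rewrite /G'; case: (fintype.split i) => j; first by exists j.
    by case: ifP => _ [_ [k _ Gk]]; exists k.
  move=> j; have [x [Bx]] := vB2 (unsplit (inl j)); rewrite /G' unsplitK => Gx.
  by exists x.
move=> [z Bz]; subst B.
have [x [ex hx]] := vB2 (unsplit (inr ord0)); rewrite /G' unsplitK /= in hx.
have [y [ey hy]] := vB2 (unsplit (inr (@Ordinal 2 1 isT))).
rewrite /G' unsplitK /= in hy.
case: hx => hx _; case: hy => hy _.
rewrite ex in hx; rewrite ey in hy.
have : (Oa `&` Ob) z by split.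
by move/eqP: dis => ->.
Qed.

Lemma ne_nsing (R : realType) (X : metricType R) n (U : set (set X)) :
  (2 <= n)%N -> (forall x : X, ~ open [set x]) -> Fn_open n U -> U !=set0 ->
  (U `&` @nsing X) !=set0.
Proof.
move=> n2 noiso [sU oU] [A UA].
case: (pselect (exists x, A = [set x])) => [[x eA]|ns]; last by exists A.
have [m [G [oG [[vA1 vA2] sub]]]] := oU A UA.
have Gx : forall i, G i x.
  move=> i; have [y [Ay Gy]] := vA2 i; have yx : y = x by move: Ay; rewrite eA.
  by rewrite -yx.
have nb : \forall z \near x, forall i, G i z.
  apply: filter_forall => i; apply: open_nbhs_nbhs; split; [exact: oG|exact: Gx].
have [z [zx Gz]] : exists z, z <> x /\ forall i, G i z.
  apply: contrapT => hn; apply: (noiso x); rewrite openE => y yx; have -> : y = x := yx.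
  apply: filterS nb => z Gz; apply: contrapT => zx; apply: hn; by exists z.
have [i0 _] : exists i : 'I_m, G i x by apply: vA1; rewrite eA.
exists [set y | y = x \/ y = z]; split.
  apply: sub; split; last exact: Fn2.
  split; first by move=> y [->|->]; exists i0.
  by move=> i; exists x; split; [left|].
move=> [w ew]; apply: zx.
have : [set w] x by rewrite -ew; left.
have : [set w] z by rewrite -ew; right.
by move=> /= -> ->.
Qed.

Lemma q_pre (X : choiceType) n (U : set (set X)) : U `<=` Fn n ->
  Fn n `&` (@qSF X) @^-1` ((@qSF X) @` (U `&` @nsing X)) = U `&` @nsing X.
Proof.
move=> sU; apply/seteqP; split => B.
  move=> [FB [A [UA nsA] e]]; rewrite qSF_some // in e.
  by have [-> _] := qSF_Some (esym e).
by move=> [UB nsB]; split; [exact: sU | exists B].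
Qed.

Lemma p32 (R : realType) (X : metricType R) n (f : X -> X) :
  (2 <= n)%N -> connected [set: X] -> SFn_Ztransitive n f -> Fn_Ztransitive n f.
Proof.
move=> n2 cX H U V sU sV oU oV neU neV.
case: (pselect (exists x : X, [set x] = [set: X])) => [[x hx]|nx].
  have one : forall A, Fn n A -> A = [set x].
    move=> A [[a Aa] _]; apply/seteqP; split => y.
      by move=> _; have : [set x] y by rewrite hx.
    move=> ->; have : [set x] a by rewrite hx.
    by move=> /= <-.
  have [A UA] := neU; have [B VB] := neV.
  exists (Posz 0), B; split => //=; exists A => //.
  by rewrite (one A (sU A UA)) (one B (sV B VB)).
have noiso : forall x : X, ~ open [set x].
  by move=> x ox; apply: nx; exists x; exact: singleton_open_all.
pose qU := (@qSF X) @` (U `&` @nsing X).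
pose qV := (@qSF X) @` (V `&` @nsing X).
have sq : forall W : set (set X), W `<=` Fn n -> (@qSF X) @` (W `&` @nsing X) `<=` SFn n.
  by move=> W sW _ [A [WA _] <-]; exists A => //; exact: sW.
have oq : forall W : set (set X), Fn_open n W -> SFn_open n ((@qSF X) @` (W `&` @nsing X)).
  move=> W oW; split; first exact: sq oW.1.
  by rewrite q_pre; [exact: open_nsing | exact: oW.1].
have neq : forall W : set (set X), Fn_open n W -> W !=set0 -> ((@qSF X) @` (W `&` @nsing X)) !=set0.
  move=> W oW nW; have [A WA] := ne_nsing n2 noiso oW nW.
  by exists (qSF A); exists A.
have [k [c [hc [B [VB nsB] eB]]]] := H qU qV (sq U sU) (sq V sV) (oq U oU) (oq V oV)
  (neq U oU neU) (neq V oV neV).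
rewrite qSF_some // in eB; subst c.
case: k hc => m.
  move=> /= [c0 [A [UA nsA] <-]] hq; rewrite iter_qSF in hq.
  have [e _] := qSF_Some hq.
  by exists (Posz m), B; split => //=; exists A.
move=> hc; have : qU (iter m.+1 (SFn_map f) (Some B)) := hc.
rewrite -(qSF_some nsB) iter_qSF => -[A [UA nsA]].
move=> hq; rewrite qSF_some // in hq.
have [e _] := qSF_Some (esym hq).
by exists (Negz m), B; split => //; have : iter m.+1 (Fn_map f) B = A := e; rewrite /iterZ_img /preimage /= => ->.
Qed.

Theorem theorem4 (R : realType) :
  (forall (X : metricType R) (n : nat) (f : X -> X),
      continuum X -> (2 <= n)%N -> continuous f ->
      (Fn_Ztransitive n f <-> SFn_Ztransitive n f) /\
      (Fn_Ztransitive n f -> Ztransitive f)) /\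
  (exists (X : metricType R) (n : nat) (f : X -> X),
      continuum X /\ (2 <= n)%N /\ continuous f /\
      Ztransitive f /\ ~ Fn_Ztransitive n f).
Proof.
split.
  move=> X n f cX n2 fc; split; last exact: p21 (ltnW n2).
  split; [exact: p23 | exact: p32 n2 cX.2.2].
exists (I01 R), 2%N, (@fX R).
split; first exact: I01_continuum.
split => //; split; first exact: fX_cont.
split; [exact: fX_Ztrans | exact: not_Fn_Ztrans].
Qed.
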